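(* Let $K_1,\dots,K_n$ be an operator Frobenius algebra on a smooth $n$-manifold with structure functions $a_{ij}^s$, and assume the $K_i$ are pairwise symmetries of each other. Then for smooth functions $h^1,\dots,h^n$, the operator field $K=\sum_s h^sK_s$ is a common symmetry of $K_1,\dots,K_n$ if and only if $$K_i^*\,\mathrm dh^j=\sum_s a^j_{is}\,\mathrm dh^s\qquad\text{for all } i,j=1,\dots,n.$$
   Context: For operator fields ($(1,1)$-tensor fields) $L,M$ and vector fields $\xi,\eta$ set $\langle L,M\rangle(\xi,\eta)=LM[\xi,\eta]+[L\xi,M\eta]-L[\xi,M\eta]-M[L\xi,\eta]$. Commuting operator fields $L,M$ are symmetries of each other if $\langle L,M\rangle(\xi,\xi)=0$ for all $\xi$; a common symmetry of several operator fields is an operator field commuting with and being a symmetry of each of them. $L^*$ is the dual operator on 1-forms. An operator Frobenius algebra on an $n$-manifold $\mathsf M$ is given by $n$ smooth pairwise commuting operator fields $K_1,\dots,K_n$ such that at each $x\in\mathsf M$: (A1) there is $\xi\in T_x\mathsf M$ with $K_1\xi,\dots,K_n\xi$ linearly independent, and (A2) there is $a\in T_x^*\mathsf M$ with $K_1^*a,\dots,K_n^*a$ linearly independent. Its structure functions $a_{ij}^s$ are defined by $K_iK_j=\sum_s a_{ij}^sK_s$. *)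

(* Defs.v *)
(* Local (coordinate) model: an open set
   U of R^n (column vectors 'cV[R]_n) instead of an abstract smooth manifold. *)
From HB Require Import structures.
From mathcomp Require Import all_boot all_order all_algebra.
From mathcomp Require Import all_classical all_reals all_analysis.
Set Implicit Arguments. Unset Strict Implicit. Unset Printing Implicit Defensive.
Import Order.TTheory GRing.Theory Num.Theory.
Import numFieldNormedType.Exports.
Local Open Scope classical_set_scope.
Local Open Scope ring_scope.

Section OpFields.
Variables (R : realType) (n : nat).
Local Notation pt := 'cV[R]_n.

Definition e_ (i : 'I_n) : pt := delta_mx i 0.

Fixpoint iter_partial (s : seq 'I_n) (f : pt -> R) : pt -> R :=
  match s with
  | [::] => f
  | i :: s' => fun x => 'D_(e_ i) (iter_partial s' f) x
  end.

Definition smooth_on (U : set pt) (f : pt -> R) : Prop :=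
  forall (s : seq 'I_n) (x : pt), U x ->
    {for x, continuous (iter_partial s f)} /\
    forall i : 'I_n, derivable (iter_partial s f) x (e_ i).

Definition smooth_vf (U : set pt) (X : pt -> pt) : Prop :=
  forall k : 'I_n, smooth_on U (fun x => X x k 0).
Definition smooth_op (U : set pt) (L : pt -> 'M[R]_n) : Prop :=
  forall k l : 'I_n, smooth_on U (fun x => L x k l).

Definition lie (X Y : pt -> pt) : pt -> pt :=
  fun x => 'D_(X x) Y x - 'D_(Y x) X x.

Definition app (L : pt -> 'M[R]_n) (X : pt -> pt) : pt -> pt :=
  fun x => L x *m X x.

Definition angle (L M : pt -> 'M[R]_n) (X Y : pt -> pt) : pt -> pt :=
  fun x => L x *m M x *m lie X Y x + lie (app L X) (app M Y) x
           - L x *m lie X (app M Y) x - M x *m lie (app L X) Y x.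

Definition symmetries_on (U : set pt) (L M : pt -> 'M[R]_n) : Prop :=
  (forall x, U x -> L x *m M x = M x *m L x) /\
  (forall X : pt -> pt, smooth_vf U X ->
     forall x, U x -> angle L M X X x = 0).

Definition common_symmetry (U : set pt) (L : pt -> 'M[R]_n)
    (K : 'I_n -> pt -> 'M[R]_n) : Prop :=
  forall i : 'I_n, symmetries_on U L (K i).

Definition op_frobenius_algebra (U : set pt) (K : 'I_n -> pt -> 'M[R]_n) : Prop :=
  [/\ (forall i, smooth_op U (K i)),
      (forall i j x, U x -> K i x *m K j x = K j x *m K i x),
      (forall x, U x -> exists xi : pt,
         row_free (\matrix_(i < n, k < n) (K i x *m xi) k 0)) &
      (forall x, U x -> exists a : 'rV[R]_n,
         row_free (\matrix_(i < n, k < n) (a *m K i x) 0 k))].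

(* differential dh as a row vector (1-form): (dh)_k = d_k h *)
Definition dform (h : pt -> R) (x : pt) : 'rV[R]_n :=
  \row_(k < n) 'D_(e_ k) h x.

End OpFields.

(* Main.v *)
Require Import Defs.
From HB Require Import structures.
From mathcomp Require Import all_boot all_order all_algebra.
From mathcomp Require Import all_classical all_reals all_analysis.
Import Order.TTheory GRing.Theory Num.Theory.
Import numFieldNormedType.Exports.
From mathcomp Require Import ring.
Local Open Scope classical_set_scope.
Local Open Scope ring_scope.
Section C1.
Context {R : realType} {n : nat}.
Local Notation pt := 'cV[R]_n.

Lemma norm_entry (h : pt) k : `|h k 0| <= `|h|.
Proof.
rewrite [leRHS]/Num.Def.normr/= mx_normrE.
by apply: le_trans (le_bigmax _ _ (k, 0)).
Qed.

Lemma norm_le (h : pt) c : 0 <= c -> (forall k, `|h k 0| <= c) -> `|h| <= c.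
Proof.
move=> c0 hc; rewrite /Num.Def.normr/= mx_normrE (bigmax_le _ c0)// => -[i j] _.
by rewrite /= (ord1 j).
Qed.

Lemma mvt0 (g : R -> R) (a : R) :
  (forall t, `|t| <= `|a| -> derivable g t 1) ->
  exists c, `|c| <= `|a| /\ g a - g 0 = 'D_1 g c * a.
Proof.
move=> dg; case: (leP 0 a) => a0.
- have : {within `[0, a], continuous g}.
    apply: derivable_within_continuous => t; rewrite in_itv /= => /andP[t0 ta].
    by apply: dg; rewrite !ger0_norm.
  case/(MVT_segment a0 (df := fun t => 'D_1 g t)).
    move=> t; rewrite in_itv /= => /andP[t0 ta]; apply: derivableP; apply: dg.
    by rewrite !ger0_norm // ltW.
  move=> c; rewrite in_itv /= => /andP[c0 ca] E; exists c; split.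
    by rewrite !ger0_norm.
  by rewrite E subr0.
- have a0' : a <= 0 by exact: ltW.
  have : {within `[a, 0], continuous g}.
    apply: derivable_within_continuous => t; rewrite in_itv /= => /andP[t0 ta].
    by apply: dg; rewrite !ler0_norm // lerN2.
  case/(MVT_segment a0' (df := fun t => 'D_1 g t)).
    move=> t; rewrite in_itv /= => /andP[t0 ta]; apply: derivableP; apply: dg.
    by rewrite !ler0_norm ?lerN2 // ltW.
  move=> c; rewrite in_itv /= => /andP[c0 ca] E; exists c; split.
    by rewrite !ler0_norm // lerN2.
  by rewrite -opprB E sub0r mulrN opprK.
Qed.

Lemma line_fun (f : pt -> R) (p e : pt) (t : R) :
  (fun s : R => s^-1 *: (((fun u : R => f (p + u *: e)) \o shift t) (s *: 1) - f (p + t *: e)))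
  = (fun s : R => s^-1 *: ((f \o shift (p + t *: e)) (s *: e) - f (p + t *: e))).
Proof.
apply/funext => s /=; congr (_ *: (f _ - _)).
rewrite [s *: 1]/GRing.scale /= mulr1.

by rewrite scalerDl addrCA addrC.
Qed.

Lemma line_derivable (f : pt -> R) (p e : pt) (t : R) :
  derivable f (p + t *: e) e -> derivable (fun u : R => f (p + u *: e)) t 1.
Proof. by rewrite /derivable line_fun. Qed.

Lemma line_derive (f : pt -> R) (p e : pt) (t : R) :
  'D_1 (fun u : R => f (p + u *: e)) t = 'D_e f (p + t *: e).
Proof. by rewrite /derive line_fun. Qed.

Lemma shiftK (V : zmodType) (x a b : V) : x + a + b - x = a + b.
Proof. by rewrite addrAC [x + a - x]addrAC subrr add0r. Qed.

Lemma C1_key (f : pt -> R) (x : pt) (r : R) :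
  (forall y, `|y - x| < r -> forall k, derivable f y (e_ R k)) ->
  forall h : pt, `|h| < r -> exists q : 'I_n -> pt,
    (forall k, `|q k - x| <= `|h|) /\
    f (x + h) - f x = \sum_(k < n) h k 0 * 'D_(e_ R k) f (q k).
Proof.
move=> dH h hr.
pose tr (m : nat) : pt := \col_i (if (i < m)%N then h i 0 else 0).
have tr0 : tr 0%N = 0 by apply/matrixP => i j; rewrite !mxE.
have trn : tr n = h by apply/matrixP => i j; rewrite !mxE ltn_ord (ord1 j).
have trS : forall k : 'I_n, tr k.+1 = tr k + h k 0 *: e_ R k.
  move=> k; apply/matrixP => i j; rewrite !mxE (ord1 j) eqxx andbT ltnS.
  case: (ltngtP i k) => [ik|ki|/val_inj ->].
  - by rewrite (_ : (i == k) = false) ?mulr0 ?addr0 //; exact: ltn_eqF ik.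
  - by rewrite (_ : (i == k) = false) ?mulr0 ?addr0 //; exact: gtn_eqF ki.
  - by rewrite eqxx mulr1 add0r.
have trle : forall (k : 'I_n) (c : R), `|c| <= `|h k 0| -> `|tr k + c *: e_ R k| <= `|h|.
  move=> k c ck; apply: norm_le => // i; rewrite !mxE eqxx andbT.
  case: (ltngtP i k) => [ik|ki|/val_inj ->].
  - by rewrite (_ : (i == k) = false) ?mulr0 ?addr0 ?norm_entry //; exact: ltn_eqF ik.
  - by rewrite (_ : (i == k) = false) ?mulr0 ?addr0 ?normr0 //; exact: gtn_eqF ki.
  - by rewrite eqxx ?ltnn mulr1 add0r (le_trans ck) // norm_entry.
have hc : forall k : 'I_n, exists c : R, `|c| <= `|h k 0| /\
    f (x + tr k.+1) - f (x + tr k) = h k 0 * 'D_(e_ R k) f (x + tr k + c *: e_ R k).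
  move=> k.
  have [|c [cle E]] := @mvt0 (fun u : R => f ((x + tr k) + u *: e_ R k)) (h k 0).
    move=> t tle; apply: line_derivable; apply: dH.
    by rewrite shiftK (le_lt_trans (trle _ _ tle)).
  exists c; split => //.
  rewrite scale0r addr0 in E.
  by rewrite trS addrA E line_derive mulrC.
have [c Hc] := fin_all_exists hc.
exists (fun k : 'I_n => x + tr k + c k *: e_ R k); split.
  by move=> k; rewrite shiftK trle //; case: (Hc k).
rewrite -{1}trn -{2}(addr0 x) -tr0.
rewrite -(telescope_sumr (fun m => f (x + tr m)) (leq0n n)) big_mkord.
by apply: eq_bigr => k _; case: (Hc k).
Qed.

Lemma C1_diff (f : pt -> R) (x : pt) (r : R) : 0 < r ->
  (forall y, `|y - x| < r -> forall k, derivable f y (e_ R k)) ->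
  (forall k, {for x, continuous (fun y => 'D_(e_ R k) f y)}) ->
  differentiable f x.
Proof.
move=> r0 dH cH.
pose c k := 'D_(e_ R k) f x.
pose df := fun h : pt => \sum_(k < n) h k 0 * c k.
have dfl : linear df.
  move=> a u v; rewrite /df scaler_sumr -big_split /=; apply: eq_bigr => k _.
  by rewrite !mxE /GRing.scale /= mulrDl mulrA.
pose dfL : {linear pt -> R} := HB.pack df (GRing.isLinear.Build _ _ _ _ df dfl).
have dfc : continuous dfL.
  have -> : (dfL : pt -> R) = \sum_(k < n) (fun h : pt => h k 0 *: c k).
    by apply/funext => h; rewrite fct_sumE.
  move=> y; apply: differentiable_continuous; apply: differentiable_sum => k.
  apply: differentiableZl; exact: differentiable_coord.
have H : f \o shift x = cst (f x) + dfL +o_ (0 : pt) id.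
  apply/eqaddoP => eps eps0.
  pose e1 := eps / (n%:R + 1).
  have e10 : 0 < e1 by rewrite /e1 divr_gt0 // ltr_pwDr.
  have ne1 : n%:R * e1 <= eps.
    rewrite /e1 mulrA ler_pdivrMr ?ltr_pwDr //.
    by rewrite mulrDr mulr1 mulrC lerDl ltW.
  have : \forall y \near x, forall k, `|c k - 'D_(e_ R k) f y| < e1.
    apply: (@filter_forall pt 'I_n (fun k y => `|c k - 'D_(e_ R k) f y| < e1) (nbhs x) _).
    move=> k; exact: (cvgrPdist_lt _ _).1 (cH k) e1 e10.
  case/nbhs_ballP => d d0 dB.
  apply/nbhs_ballP; exists (Num.min d r); first by rewrite /= lt_min d0 r0.
  move=> h /= Bh; rewrite -ball_normE /= sub0r normrN lt_min in Bh.
  case/andP: Bh => hd hr.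
  have [q [qle E]] := C1_key _ _ _ dH _ hr.
  rewrite !fctE /= (addrC h x) opprD addrA E /df -sumrB.
  apply: (le_trans (ler_norm_sum _ _ _)).
  apply: (@le_trans _ _ (\sum_(k < n) `|h| * e1)).
    apply: ler_sum => k _; rewrite -mulrBr normrM.
    apply: ler_pM => //; first exact: norm_entry.
    have Hq : ball x d (q k).
      by rewrite -ball_normE /= distrC; exact: le_lt_trans (qle k) hd.
    by have := dB _ Hq k; rewrite distrC => /ltW.
  rewrite sumr_const card_ord -mulr_natl mulrCA mulrC.
  by rewrite ler_wpM2r.
apply/diff_locallyP; rewrite (diff_unique dfc H); split => //.
Qed.

Lemma smooth_diff (U : set pt) (f : pt -> R) (x : pt) :
  open U -> smooth_on U f -> U x -> differentiable f x.
Proof.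
move=> oU sf Ux.
have : nbhs x U by apply: open_nbhs_nbhs; split.
case/nbhs_ballP => r r0 rU.
apply: (C1_diff _ _ r) => //.
- move=> y yr k; have Uy : U y by apply: rU; rewrite -ball_normE /= distrC.
  exact: (sf [::] y Uy).2 k.
- move=> k; exact: (sf [:: k] x Ux).1.
Qed.

Lemma mx_diff p q (F : pt -> 'M[R]_(p, q)) (x : pt) :
  (forall i j, differentiable (fun y => F y i j) x) -> differentiable F x.
Proof.
move=> dF.
have -> : F = \sum_i \sum_j (fun y => F y i j *: delta_mx i j).
  apply/funext => y; rewrite [LHS]matrix_sum_delta fct_sumE.
  by apply: eq_bigr => i _; rewrite fct_sumE.
apply: differentiable_sum => i; apply: differentiable_sum => j.
exact: differentiableZl.
Qed.

Lemma entry_diff p q (F : pt -> 'M[R]_(p, q)) (x : pt) i j :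
  differentiable F x -> differentiable (fun y => F y i j) x.
Proof.
move=> dF; exact: (differentiable_comp dF (differentiable_coord _ i j)).
Qed.

Lemma diff_mulmx p q s (F : pt -> 'M[R]_(p, q)) (G : pt -> 'M[R]_(q, s)) x :
  differentiable F x -> differentiable G x ->
  differentiable (fun y => F y *m G y) x.
Proof.
move=> dF dG; apply: mx_diff => i j.
have -> : (fun y => (F y *m G y) i j) =
    \sum_m ((fun y => F y i m) * (fun y => G y m j)).
  by apply/funext => y; rewrite mxE fct_sumE.
apply: differentiable_sum => m; apply: differentiableM; exact: entry_diff.
Qed.

Lemma diff_scalemx p q (h : pt -> R) (F : pt -> 'M[R]_(p, q)) x :
  differentiable h x -> differentiable F x ->
  differentiable (fun y => h y *: F y) x.
Proof.
move=> dh dF; apply: mx_diff => i j.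
have -> : (fun y => (h y *: F y) i j) = h * (fun y => F y i j).
  by apply/funext => y; rewrite mxE.
apply: differentiableM => //; exact: entry_diff.
Qed.

Lemma diff_sumf (W : normedModType R) m (F : 'I_m -> pt -> W) x :
  (forall s, differentiable (F s) x) ->
  differentiable (fun y => \sum_s F s y) x.
Proof.
move=> dF; have -> : (fun y => \sum_s F s y) = \sum_s F s.
  by rewrite fct_sumE.
exact: differentiable_sum.
Qed.

Lemma D_sumf (W : normedModType R) m (F : 'I_m -> pt -> W) x v :
  (forall s, differentiable (F s) x) ->
  'D_v (fun y => \sum_s F s y) x = \sum_s 'D_v (F s) x.
Proof.
move=> dF; have -> : (fun y => \sum_s F s y) = \sum_s F s.
  by rewrite fct_sumE.
by rewrite derive_sum // => s; exact: diff_derivable.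
Qed.

Lemma D_mulmx p q s (F : pt -> 'M[R]_(p, q)) (G : pt -> 'M[R]_(q, s)) x v :
  differentiable F x -> differentiable G x ->
  'D_v (fun y => F y *m G y) x = 'D_v F x *m G x + F x *m 'D_v G x.
Proof.
move=> dF dG.
rewrite derive_mx; last exact/diff_derivable/diff_mulmx.
have dFv : derivable F x v by exact: diff_derivable.
have dGv : derivable G x v by exact: diff_derivable.
rewrite (derive_mx dFv) (derive_mx dGv).
apply/matrixP => i j; rewrite !mxE.
have -> : (fun y => (F y *m G y) i j) =
    \sum_m ((fun y => F y i m) * (fun y => G y m j)).
  by apply/funext => y; rewrite mxE fct_sumE.
rewrite derive_sum; last first.
  move=> m; apply/diff_derivable/differentiableM; exact: entry_diff.
rewrite -big_split /=; apply: eq_bigr => m _.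
rewrite deriveM; try by apply/diff_derivable; exact: entry_diff.
by rewrite !mxE addrC; congr (_ + _); apply: mulrC.
Qed.

Lemma D_scalemx p q (h : pt -> R) (F : pt -> 'M[R]_(p, q)) x v :
  differentiable h x -> differentiable F x ->
  'D_v (fun y => h y *: F y) x = 'D_v h x *: F x + h x *: 'D_v F x.
Proof.
move=> dh dF.
rewrite derive_mx; last exact/diff_derivable/diff_scalemx.
have dFv : derivable F x v by exact: diff_derivable.
rewrite (derive_mx dFv).
apply/matrixP => i j; rewrite !mxE.
have -> : (fun y => (h y *: F y) i j) = h * (fun y => F y i j).
  by apply/funext => y; rewrite mxE.
have dhv : derivable h x v by exact: diff_derivable.
have dFij : derivable (fun y => F y i j) x v.
  by apply/diff_derivable; exact: entry_diff.
rewrite deriveM //.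
by rewrite addrC; congr (_ + _); apply: mulrC.
Qed.

Lemma D_lin (W : normedModType R) m (F : pt -> W) x (c : 'I_m -> R) (w : 'I_m -> pt) :
  differentiable F x ->
  'D_(\sum_s c s *: w s) F x = \sum_s c s *: 'D_(w s) F x.
Proof.
move=> dF; rewrite deriveE // linear_sum; apply: eq_bigr => s _.
by rewrite linearZ deriveE.
Qed.

Lemma D_dform (h : pt -> R) x v : differentiable h x ->
  'D_v h x = (dform h x *m v) 0 0.
Proof.
move=> dh.
have vE : v = \sum_k v k 0 *: e_ R k.
  rewrite [LHS]matrix_sum_delta; apply: eq_bigr => k _.
  by rewrite big_ord1.
rewrite [in LHS]vE D_lin // mxE; apply: eq_bigr => k _.
by rewrite /dform mxE; apply: mulrC.
Qed.

Lemma zmod_id1 p q (a b c d e g k : 'M[R]_(p,q)) :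
  a + b - (c + d) - (e + k + - d) - (b + - (g + k)) = a - c - e + g.
Proof. by apply/matrixP => i j; rewrite !mxE; ring. Qed.

Definition T (x : pt) (L M : pt -> 'M[R]_n) (xi : pt) : pt :=
  'D_(L x *m xi) M x *m xi - 'D_(M x *m xi) L x *m xi
  - L x *m ('D_xi M x *m xi) + M x *m ('D_xi L x *m xi).

Lemma angle_T (L M : pt -> 'M[R]_n) (X : pt -> pt) x :
  differentiable L x -> differentiable M x -> differentiable X x ->
  L x *m M x = M x *m L x -> angle L M X X x = T x L M (X x).
Proof.
move=> dL dM dX LM.
rewrite /angle /lie /app subrr mulmx0 add0r !D_mulmx //.
rewrite !mulmxDr !mulmxN !mulmxDr !mulmxA -LM /T !mulmxA.
exact: zmod_id1.
Qed.

Lemma mx_id2 (A C K Ki Cp : 'M[R]_n) (Z xi : pt) (h p q : R) :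
  (h *: A) *m xi - (p *: K + h *: C) *m xi - (h *: K) *m Z
    + Ki *m ((q *: K + h *: Cp) *m xi)
  = h *: (A *m xi - C *m xi - K *m Z + Ki *m (Cp *m xi))
    + (q *: (Ki *m K *m xi) - p *: (K *m xi)).
Proof.
rewrite !(mulmxDl, mulmxDr, mulmxN, mulNmx, mulmxA) -!scalemxAl -!scalemxAr.
rewrite ?mulmxA -?scalemxAl -?scalemxAr ?mulmxA -?scalemxAl.
by apply/matrixP => i j; rewrite !mxE; ring.
Qed.

Lemma T_Kh (K : 'I_n -> pt -> 'M[R]_n) (h : 'I_n -> pt -> R) i x xi :
  (forall s, differentiable (K s) x) -> (forall s, differentiable (h s) x) ->
  T x (fun y => \sum_s h s y *: K s y) (K i) xi =
  \sum_s (h s x *: T x (K s) (K i) xi +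
     ('D_xi (h s) x *: (K i x *m K s x *m xi)
      - 'D_(K i x *m xi) (h s) x *: (K s x *m xi))).
Proof.
move=> dK dh.
set Kh := fun y => \sum_s h s y *: K s y.
have E1 : Kh x *m xi = \sum_s h s x *: (K s x *m xi).
  by rewrite /Kh mulmx_suml; apply: eq_bigr => s _; rewrite scalemxAl.
have E2 : 'D_(Kh x *m xi) (K i) x = \sum_s h s x *: 'D_(K s x *m xi) (K i) x.
  by rewrite E1 D_lin.
have E3 : forall v, 'D_v Kh x =
    \sum_s ('D_v (h s) x *: K s x + h s x *: 'D_v (K s) x).
  move=> v; rewrite /Kh D_sumf; last by move=> s; exact: diff_scalemx.
  by apply: eq_bigr => s _; rewrite D_scalemx.
rewrite /T E2 !E3 /Kh !mulmx_suml mulmx_sumr -!sumrB -big_split /=.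
apply: eq_bigr => s _.
exact: mx_id2.
Qed.

Lemma T_self x (L : pt -> 'M[R]_n) xi : T x L L xi = 0.
Proof. by rewrite /T subrr sub0r addNr. Qed.

Lemma iter_partial_cst (c : R) s :
  exists d : R, iter_partial s (fun _ : pt => c) = fun _ => d.
Proof.
elim: s => [|i s [d IH]]; first by exists c.
by exists 0; rewrite /= IH; apply/funext => y; exact: derive_cst.
Qed.

Lemma smooth_cst (U : set pt) (c : R) : smooth_on U (fun _ : pt => c).
Proof.
move=> s y _; have [d ->] := iter_partial_cst c s; split.
  exact: cst_continuous.
by move=> i; exact: derivable_cst.
Qed.

Lemma smooth_vf_cst (U : set pt) (xi : pt) : smooth_vf U (fun _ => xi).
Proof. by move=> k; exact: smooth_cst. Qed.

Lemma indep (A : 'I_n -> 'M[R]_n) (r : 'I_n -> 'rV[R]_n) (xi0 : pt) :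
  row_free (\matrix_(i < n, k < n) (A i *m xi0) k 0) ->
  (forall xi : pt, \sum_j (r j *m xi) 0 0 *: (A j *m xi) = 0) ->
  forall j, r j = 0.
Proof.
move=> rf H.
have ind : forall c : 'I_n -> R, \sum_j c j *: (A j *m xi0) = 0 -> forall j, c j = 0.
  move=> c Hc j.
  have : (\row_j c j) *m (\matrix_(i < n, k < n) (A i *m xi0) k 0) =
         0 *m (\matrix_(i < n, k < n) (A i *m xi0) k 0).
    apply/matrixP => z k; rewrite mul0mx !mxE.
    transitivity ((\sum_j c j *: (A j *m xi0)) k 0); last by rewrite Hc mxE.
    by rewrite summxE; apply: eq_bigr => l _; rewrite !mxE.
  by move/(row_free_inj rf)/matrixP/(_ 0 j); rewrite !mxE.
have r0 : forall j, (r j *m xi0) 0 0 = 0 by exact: ind (fun j => (r j *m xi0) 0 0) (H xi0).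
have rv : forall (v : pt) (j : 'I_n), (r j *m v) 0 0 = 0.
  move=> v.
  suff Hs : \sum_j (r j *m v) 0 0 *: (A j *m xi0) = 0.
    by move=> j; exact: (ind (fun j => (r j *m v) 0 0) Hs j).
  set S := \sum_j _.
  have S2 : S + S = \sum_j (r j *m (xi0 + v)) 0 0 *: (A j *m (xi0 + v))
             - \sum_j (r j *m (xi0 - v)) 0 0 *: (A j *m (xi0 - v)).
    rewrite /S -big_split -sumrB /=.
    apply: eq_bigr => j _.
    rewrite !mulmxDr !mulmxN [(r j *m xi0 + _) 0 0]mxE [(r j *m xi0 - _) 0 0]mxE.
    rewrite r0 !add0r.
    by apply/matrixP => a b; rewrite !mxE; ring.
  rewrite !H subrr in S2.
  have : (2%:R : R) *: S = 0 by rewrite scaler_nat mulr2n.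
  by move/eqP; rewrite scaler_eq0 pnatr_eq0 /= => /eqP.
move=> j; apply/rowP => k; rewrite mxE.
by have := rv (e_ R k) j; rewrite /e_ -colE mxE.
Qed.

Lemma S_form (K : 'I_n -> pt -> 'M[R]_n) (h : 'I_n -> pt -> R)
    (a : 'I_n -> 'I_n -> 'I_n -> pt -> R) i x xi :
  (forall s, differentiable (h s) x) ->
  (forall s, K i x *m K s x = \sum_j a i s j x *: K j x) ->
  \sum_s ('D_xi (h s) x *: (K i x *m K s x *m xi)
          - 'D_(K i x *m xi) (h s) x *: (K s x *m xi))
  = \sum_j ((\sum_s a i s j x *: dform (h s) x - dform (h j) x *m K i x) *m xi) 0 0
       *: (K j x *m xi).
Proof.
move=> dh Km.
have rE : forall j, ((\sum_s a i s j x *: dform (h s) x - dform (h j) x *m K i x) *m xi) 0 0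
   = \sum_s a i s j x * (dform (h s) x *m xi) 0 0 - (dform (h j) x *m (K i x *m xi)) 0 0.
  move=> j; rewrite mulmxBl mulmx_suml -mulmxA !mxE summxE.
  by congr (_ - _); apply: eq_bigr => s _; rewrite -scalemxAl mxE.
under [RHS]eq_bigr => j _ do rewrite rE scalerBl.
rewrite !sumrB; congr (_ - _).
  under eq_bigr => s _ do rewrite Km mulmx_suml scaler_sumr.
  rewrite exchange_big /=; apply: eq_bigr => j _.
  rewrite scaler_suml; apply: eq_bigr => s _.
  by rewrite -scalemxAl scalerA D_dform // mulrC.
by apply: eq_bigr => s _; rewrite D_dform.
Qed.

End C1.

(* a i j s = a_{ij}^s, i.e. K_i K_j = sum_s a_{ij}^s K_s.
   The conclusion K_i^* dh^j = sum_s a^j_{is} dh^s reads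
   (dh^j) K_i = sum_s (a i s j) (dh^s) with 1-forms as row vectors. *)
Theorem mainTheorem4 (R : realType) (n : nat) (U : set 'cV[R]_n)
    (K : 'I_n -> 'cV[R]_n -> 'M[R]_n) (a : 'I_n -> 'I_n -> 'I_n -> 'cV[R]_n -> R) :
  open U ->
  op_frobenius_algebra U K ->
  (forall i j x, U x -> K i x *m K j x = \sum_(s < n) a i j s x *: K s x) ->
  (forall i j : 'I_n, i != j -> symmetries_on U (K i) (K j)) ->
  forall h : 'I_n -> 'cV[R]_n -> R,
  (forall s, smooth_on U (h s)) ->
  (common_symmetry U (fun x => \sum_(s < n) h s x *: K s x) K <->
   (forall (i j : 'I_n) x, U x ->
      dform (h j) x *m K i x = \sum_(s < n) a i s j x *: dform (h s) x)).
Proof.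
move=> oU [Ksm Kcomm A1 A2] Kmul Ksym h hsm.
set Kh := (fun x => \sum_(s < n) h s x *: K s x).
have dK : forall s x, U x -> differentiable (K s) x.
  move=> s x Ux; apply: mx_diff => k l; exact: smooth_diff oU (Ksm s k l) Ux.
have dh : forall s x, U x -> differentiable (h s) x.
  move=> s x Ux; exact: smooth_diff oU (hsm s) Ux.
have dX : forall X, smooth_vf U X -> forall x, U x -> differentiable X x.
  move=> X sX x Ux; apply: mx_diff => k l; rewrite (ord1 l).
  exact: smooth_diff oU (sX k) Ux.
have dKh : forall x, U x -> differentiable Kh x.
  move=> x Ux; apply: diff_sumf => s; apply: diff_scalemx; [exact: dh|exact: dK].
have cKh : forall i x, U x -> Kh x *m K i x = K i x *m Kh x.
  move=> i x Ux; rewrite /Kh mulmx_suml mulmx_sumr; apply: eq_bigr => s _.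
  by rewrite -scalemxAl -scalemxAr Kcomm.
pose r i j x := \sum_s a i s j x *: dform (h s) x - dform (h j) x *m K i x.
have key : forall i X x, smooth_vf U X -> U x ->
   angle Kh (K i) X X x = \sum_j ((r i j x) *m X x) 0 0 *: (K j x *m X x).
  move=> i X x sX Ux.
  rewrite angle_T; [|exact: dKh|exact: dK|exact: dX|exact: cKh].
  rewrite T_Kh; [| move=> s; exact: dK | move=> s; exact: dh].
  rewrite big_split /= big1 ?add0r.
    apply: S_form; [move=> s; exact: dh | move=> s; exact: Kmul].
  move=> s _; have [->|si] := eqVneq s i; first by rewrite T_self scaler0.
  rewrite -angle_T; [|exact: dK|exact: dK|exact: dX|exact: Kcomm].
  by rewrite ((Ksym s i si).2 X sX x Ux) scaler0.
split.
- move=> CS i j x Ux.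
  have [xi0 rf] := A1 x Ux.
  have H : forall xi : 'cV[R]_n, \sum_j0 (r i j0 x *m xi) 0 0 *: (K j0 x *m xi) = 0.
    move=> xi; have := key i (fun _ => xi) x (smooth_vf_cst U xi) Ux.
    rewrite /= => <-.
    exact: (CS i).2 _ (smooth_vf_cst U xi) x Ux.
  have := indep (fun j0 => K j0 x) (fun j0 => r i j0 x) xi0 rf H j.
  by move/eqP; rewrite subr_eq0 eq_sym => /eqP.
- move=> Hr i; split; first by move=> x Ux; exact: cKh.
  move=> X sX x Ux; rewrite key // big1 // => j _.
  by rewrite /r (Hr i j x Ux) subrr mul0mx mxE scale0r.
Qed.
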